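(* Let $f:H\to\mathbb{R}\cup\{+\infty\}$ be proper and lower semicontinuous, and let $(x^k)$ satisfy $\mathbf{H}_1$, $\mathbf{H}_2'$ and $\mathbf{H}_3$, with $m:=\inf_k a_kb_{k+1}>0$. Suppose $(x^k)$ $f$-converges to a point $x^*$ at which $f$ has the K\L{} property with desingularizing function $\varphi:[0,\eta[\to[0,+\infty[$. Let $\Phi:]0,\eta[\to\mathbb{R}$ be any primitive of $-(\varphi')^2$. (i) If $\lim_{t\to0^+}\Phi(t)\in\mathbb{R}$, then there is $K$ with $f(x^K)=f(x^* )$ and $x^k=x^*$ for all $k\ge K$. (ii) If $\lim_{t\to0^+}\Phi(t)=+\infty$, then there exists $k_0\in\mathbb{N}$ such that $f(x^k)-f(x^* )=O\Big(\Phi^{-1}\big(m\sum_{n=k_0}^{k-1}b_{n+1}\big)\Big)$ and $\|x^*-x^k\|=O\Big(\varphi\circ\Phi^{-1}\big(m\sum_{n=k_0}^{k-1}b_{n+1}\big)\Big)$.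
   Context: Subdifferential $\partial f$ (limiting Fréchet subdifferential), lazy slope $\|\partial f(x)\|_-=\inf_{p\in\partial f(x)}\|p\|$ ($+\infty$ if $\partial f(x)=\emptyset$), $f$-convergence: $x^k\to x$ strongly and $f(x^k)\to f(x)$. A desingularizing function is a continuous concave $\varphi:[0,\eta[\to[0,+\infty[$ with $\varphi(0)=0$, $C^1$ on $]0,\eta[$ with $\varphi'>0$; $f$ has the K\L{} property at $x^*$ with it if there is $\delta>0$ with $\varphi'(f(x)-f(x^* ))\|\partial f(x)\|_-\ge1$ for all $x$ with $\|x-x^*\|<\delta$ and $f(x^* )<f(x)<f(x^* )+\eta$. $\mathbf{H}_1$: $f(x^{k+1})+a_k\|x^{k+1}-x^k\|^2\le f(x^k)$, $a_k>0$. $\mathbf{H}_2'$: for each $k$, $b_{k+1}\|\partial f(x^k)\|_-\le\|x^{k+1}-x^k\|$ with $b_{k+1}>0$. $\mathbf{H}_3$: (i) $a_k\ge\underline a>0$; (ii) $(b_k)\notin\ell^1$; (iii) $\sup_{k\ge1}\frac1{a_kb_k}<\infty$. *)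

(* Defs.v *)
From Stdlib Require Import Reals.
Open Scope R_scope.

Record Hilbert := {
  hcar :> Type;
  hzero : hcar;
  hadd : hcar -> hcar -> hcar;
  hopp : hcar -> hcar;
  hscal : R -> hcar -> hcar;
  hinner : hcar -> hcar -> R;
  hadd_assoc : forall x y z, hadd x (hadd y z) = hadd (hadd x y) z;
  hadd_comm : forall x y, hadd x y = hadd y x;
  hadd_zero : forall x, hadd x hzero = x;
  hadd_opp : forall x, hadd x (hopp x) = hzero;
  hscal_one : forall x, hscal 1 x = x;
  hscal_assoc : forall a b x, hscal a (hscal b x) = hscal (a * b) x;
  hscal_distr_l : forall a x y, hscal a (hadd x y) = hadd (hscal a x) (hscal a y);
  hscal_distr_r : forall a b x, hscal (a + b) x = hadd (hscal a x) (hscal b x);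
  hinner_sym : forall x y, hinner x y = hinner y x;
  hinner_add : forall x y z, hinner (hadd x y) z = hinner x z + hinner y z;
  hinner_scal : forall a x y, hinner (hscal a x) y = a * hinner x y;
  hinner_pos : forall x, 0 <= hinner x x;
  hinner_def : forall x, hinner x x = 0 -> x = hzero;
  hcomplete : forall u : nat -> hcar,
    (forall eps, 0 < eps -> exists N, forall n p, (N <= n)%nat -> (N <= p)%nat ->
        sqrt (hinner (hadd (u n) (hopp (u p))) (hadd (u n) (hopp (u p)))) < eps) ->
    exists l, forall eps, 0 < eps -> exists N, forall n, (N <= n)%nat ->
        sqrt (hinner (hadd (u n) (hopp l)) (hadd (u n) (hopp l))) < eps
}.

Arguments hzero {h}.
Arguments hadd {h}.
Arguments hopp {h}.
Arguments hinner {h}.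

Definition hsub {H : Hilbert} (x y : H) : H := hadd x (hopp y).
Definition hnorm {H : Hilbert} (x : H) : R := sqrt (hinner x x).

Definition hconv {H : Hilbert} (u : nat -> H) (l : H) : Prop :=
  forall eps, 0 < eps -> exists N, forall n, (N <= n)%nat -> hnorm (hsub (u n) l) < eps.

(** * Extended-real-valued functions  H -> R ∪ {+oo}; [None] stands for +oo. *)
Definition efun (H : Hilbert) := H -> option R.

Definition proper {H : Hilbert} (f : efun H) : Prop := exists x v, f x = Some v.

Definition rlt_e (r : R) (v : option R) : Prop :=
  match v with None => True | Some a => r < a end.

Definition lsc {H : Hilbert} (f : efun H) : Prop :=
  forall x r, rlt_e r (f x) ->
    exists delta, 0 < delta /\ forall y, hnorm (hsub y x) < delta -> rlt_e r (f y).

Definition ele (v w : option R) : Prop :=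
  match v, w with
  | _, None => True
  | None, Some _ => False
  | Some a, Some b => a <= b
  end.

Definition fconv {H : Hilbert} (f : efun H) (u : nat -> H) (x : H) : Prop :=
  hconv u x /\
  exists fx, f x = Some fx /\
  forall eps, 0 < eps -> exists N, forall n, (N <= n)%nat ->
     exists v, f (u n) = Some v /\ Rabs (v - fx) < eps.

Definition frechet_subdiff {H : Hilbert} (f : efun H) (x p : H) : Prop :=
  exists fx, f x = Some fx /\
  forall eps, 0 < eps -> exists delta, 0 < delta /\
    forall y, hnorm (hsub y x) < delta ->
      match f y with
      | None => True
      | Some fy => fy - fx - hinner p (hsub y x) >= - eps * hnorm (hsub y x)
      end.

Definition subdiff {H : Hilbert} (f : efun H) (x p : H) : Prop :=
  exists (u q : nat -> H),
    fconv f u x /\ (forall n, frechet_subdiff f (u n) (q n)) /\ hconv q p.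

(** Lazy slope ||∂f(x)||_- = inf_{p in ∂f(x)} ||p||  (+oo if ∂f(x) is empty).
    We only need comparisons with real numbers; these are the literal
    unfoldings of  inf ≤ c  and  c ≤ inf  with the convention inf ∅ = +oo. *)
Definition lazy_slope_le {H : Hilbert} (f : efun H) (x : H) (c : R) : Prop :=
  forall eps, 0 < eps -> exists p, subdiff f x p /\ hnorm p <= c + eps.

Definition lazy_slope_ge {H : Hilbert} (f : efun H) (x : H) (c : R) : Prop :=
  forall p, subdiff f x p -> c <= hnorm p.

(** Upper bound eta in ]0,+oo] ([None] = +oo) *)
Definition below (eta : option R) (t : R) : Prop :=
  match eta with None => True | Some e => t < e end.

Definition eta_pos (eta : option R) : Prop :=
  match eta with None => True | Some e => 0 < e end.

Definition desingularizing (eta : option R) (phi dphi : R -> R) : Prop :=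
  eta_pos eta /\
  (forall t, 0 <= t -> below eta t -> 0 <= phi t) /\
  phi 0 = 0 /\
  (forall t, 0 <= t -> below eta t -> forall eps, 0 < eps ->
     exists delta, 0 < delta /\ forall s, 0 <= s -> below eta s ->
        Rabs (s - t) < delta -> Rabs (phi s - phi t) < eps) /\
  (forall s t l, 0 <= s -> below eta s -> 0 <= t -> below eta t -> 0 <= l <= 1 ->
     l * phi s + (1 - l) * phi t <= phi (l * s + (1 - l) * t)) /\
  (forall t, 0 < t -> below eta t -> derivable_pt_lim phi t (dphi t)) /\
  (forall t, 0 < t -> below eta t -> continuity_pt dphi t) /\
  (forall t, 0 < t -> below eta t -> 0 < dphi t).

Definition KL_at {H : Hilbert} (f : efun H) (xs : H) (eta : option R) (phi dphi : R -> R) : Prop :=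
  desingularizing eta phi dphi /\
  exists fs, f xs = Some fs /\
  exists delta, 0 < delta /\
    forall x fx, hnorm (hsub x xs) < delta -> f x = Some fx ->
      fs < fx -> below eta (fx - fs) ->
      lazy_slope_ge f x (/ dphi (fx - fs)).

Fixpoint psum (u : nat -> R) (k0 n : nat) : R :=
  match n with
  | O => 0
  | S n' => psum u k0 n' + u (k0 + n')%nat
  end.

(* Main.v *)
Require Import Defs.
From Stdlib Require Import Reals Lra Lia Psatz Classical.
From Coquelicot Require Continuity.
Open Scope R_scope.

Section Hil.
Variable H : Hilbert.
Implicit Types x y z u v w : H.

Lemma inner_zero_l z : hinner (@hzero H) z = 0.
Proof.
  assert (E: hinner (hadd (@hzero H) hzero) z = hinner hzero z) by (rewrite hadd_zero; reflexivity).
  rewrite hinner_add in E. lra.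
Qed.

Lemma inner_opp_l w z : hinner (hopp w) z = - hinner w z.
Proof.
  assert (E: hinner (hadd w (hopp w)) z = hinner hzero z) by (rewrite hadd_opp; reflexivity).
  rewrite hinner_add, inner_zero_l in E. lra.
Qed.

Lemma inner_sub_l x y z : hinner (hsub x y) z = hinner x z - hinner y z.
Proof. unfold hsub. rewrite hinner_add, inner_opp_l. ring. Qed.

Lemma inner_sub_r x y z : hinner z (hsub x y) = hinner z x - hinner z y.
Proof. rewrite hinner_sym, inner_sub_l, (hinner_sym H x z), (hinner_sym H y z). ring. Qed.

Lemma inner_add_r x y z : hinner z (hadd x y) = hinner z x + hinner z y.
Proof. rewrite hinner_sym, hinner_add, (hinner_sym H x z), (hinner_sym H y z). ring. Qed.
Lemma inner_scal_r a x z : hinner z (hscal H a x) = a * hinner z x.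
Proof. rewrite hinner_sym, hinner_scal, (hinner_sym H x z). ring. Qed.

Lemma hnorm_nonneg x : 0 <= hnorm x.
Proof. apply sqrt_pos. Qed.

Lemma hnorm_sym x y : hnorm (hsub x y) = hnorm (hsub y x).
Proof.
  unfold hnorm. f_equal.
  rewrite !inner_sub_l, !inner_sub_r, (hinner_sym H x y). ring.
Qed.

Lemma hnorm_self x : hnorm (hsub x x) = 0.
Proof.
  unfold hnorm. rewrite inner_sub_l, !inner_sub_r. replace (hinner x x - hinner x x - (hinner x x - hinner x x)) with 0 by ring.
  apply sqrt_0.
Qed.

Lemma hsub_zero x y : hsub x y = hzero -> x = y.
Proof.
  unfold hsub; intro E.
  assert (hadd (hadd x (hopp y)) y = hadd hzero y) by (rewrite E; reflexivity).
  rewrite <- hadd_assoc, (hadd_comm H (hopp y) y), hadd_opp, hadd_zero in H0.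
  rewrite H0, hadd_comm, hadd_zero. reflexivity.
Qed.

Lemma hnorm_zero x y : hnorm (hsub x y) = 0 -> x = y.
Proof.
  unfold hnorm; intro E. apply hsub_zero, hinner_def.
  apply sqrt_eq_0; auto. apply hinner_pos.
Qed.

Lemma CS u v : (hinner u v)^2 <= hinner u u * hinner v v.
Proof.
  assert (Q: forall l, 0 <= hinner u u + 2 * l * hinner u v + l^2 * hinner v v).
  { intro l. pose proof (hinner_pos _ (hadd u (hscal H l v))) as P.
    rewrite !hinner_add, !inner_add_r, !hinner_scal, !inner_scal_r in P.
    rewrite (hinner_sym H v u) in P. nra. }  pose proof (hinner_pos _ u). pose proof (hinner_pos _ v).
  destruct (Req_dec (hinner v v) 0) as [Z|Z].
  - destruct (Req_dec (hinner u v) 0) as [Z2|Z2].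
    + rewrite Z2, Z. lra.
    + specialize (Q (-(hinner u u + 1)/(2 * hinner u v))). rewrite Z in Q.
      assert (E: 2 * (-(hinner u u + 1)/(2 * hinner u v)) * hinner u v = -(hinner u u + 1)) by (field; auto).
      rewrite E in Q. lra.
  - assert (0 < hinner v v) by lra.
    specialize (Q (- hinner u v / hinner v v)).
    assert (E: hinner u u + 2 * (- hinner u v / hinner v v) * hinner u v + (- hinner u v / hinner v v)^2 * hinner v v
       = (hinner u u * hinner v v - hinner u v ^2) / hinner v v) by (field; auto).
    rewrite E in Q.
    assert (0 <= (hinner u u * hinner v v - hinner u v ^2)).
    { apply Rmult_le_reg_r with (/ hinner v v). apply Rinv_0_lt_compat; lra. lra. }
    lra.
Qed.

Lemma htri x y z : hnorm (hsub x z) <= hnorm (hsub x y) + hnorm (hsub y z).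
Proof.
  set (u := hsub x y). set (v := hsub y z).
  assert (E: hinner (hsub x z) (hsub x z) = hinner u u + 2 * hinner u v + hinner v v).
  { unfold u, v. rewrite !inner_sub_l, !inner_sub_r.
    rewrite (hinner_sym H y x), (hinner_sym H z x), (hinner_sym H z y). ring. }
  unfold hnorm. rewrite E.
  pose proof (CS u v). pose proof (hinner_pos _ u). pose proof (hinner_pos _ v).
  pose proof (sqrt_pos (hinner u u)). pose proof (sqrt_pos (hinner v v)).
  assert (hinner u v <= sqrt (hinner u u) * sqrt (hinner v v)).
  { rewrite <- sqrt_mult by auto.
    destruct (Rle_or_lt (hinner u v) 0). { pose proof (sqrt_pos (hinner u u * hinner v v)). lra. }
    rewrite <- (sqrt_pow2 (hinner u v)) by lra. apply sqrt_le_1_alt. lra. }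
  rewrite <- (sqrt_pow2 (sqrt (hinner u u) + sqrt (hinner v v))) by lra.
  apply sqrt_le_1_alt.
  replace ((sqrt (hinner u u) + sqrt (hinner v v)) ^ 2) with
    (sqrt (hinner u u) * sqrt (hinner u u) + 2 * (sqrt (hinner u u) * sqrt (hinner v v)) + sqrt (hinner v v) * sqrt (hinner v v)) by ring.
  rewrite !sqrt_sqrt by auto. lra.
Qed.

End Hil.

Lemma below_mono eta s t : below eta t -> s <= t -> below eta s.
Proof. destruct eta; simpl; lra. Qed.

Lemma tangent eta phi dphi : desingularizing eta phi dphi ->
  forall s t, 0 < s -> below eta s -> 0 <= t -> below eta t ->
  phi t - phi s <= dphi s * (t - s).
Proof.
  intros [Hep [Hpos [H0 [Hc [Hconc [Hd [Hdc Hdp]]]]]]] s t Hs Hbs Ht Hbt.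
  destruct (Rle_or_lt (phi t - phi s) (dphi s * (t - s))) as [|Hlt]; auto.
  exfalso.
  set (D := phi t - phi s - dphi s * (t - s)).
  assert (HD: 0 < D) by (unfold D; lra).
  assert (Hts: t <> s) by (intro E; subst; unfold D in HD; lra).
  assert (Hab: 0 < Rabs (t - s)) by (apply Rabs_pos_lt; lra).
  destruct (Hd s Hs Hbs (D / (2 * Rabs (t - s)))) as [del Hdel].
  { apply Rdiv_lt_0_compat; lra. }
  set (l := Rmin (1/2) (del / (2 * Rabs (t - s)))).
  assert (Hl0: 0 < l).
  { unfold l. apply Rmin_glb_lt. lra. apply Rdiv_lt_0_compat. apply (cond_pos del). lra. }
  assert (Hl1: l <= 1/2) by apply Rmin_l.
  assert (Hl2: l <= del / (2 * Rabs (t - s))) by apply Rmin_r.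
  set (h := l * (t - s)).
  assert (Hh0: h <> 0) by (unfold h; apply Rmult_integral_contrapositive; split; lra).
  assert (Hhd: Rabs h < del).
  { unfold h. rewrite Rabs_mult, Rabs_pos_eq by lra.
    apply Rmult_le_compat_r with (r := Rabs (t - s)) in Hl2; [|lra].
    replace (del / (2 * Rabs (t - s)) * Rabs (t - s)) with (del / 2) in Hl2 by (field; lra).
    pose proof (cond_pos del). lra. }
  specialize (Hdel h Hh0 Hhd).
  assert (Hcv := Hconc t s l Ht Hbt (Rlt_le _ _ Hs) Hbs ltac:(lra)).
  replace (l * t + (1 - l) * s) with (s + h) in Hcv by (unfold h; ring).
  set (q := (phi (s + h) - phi s) / h) in Hdel.
  assert (Eq: phi (s + h) - phi s = q * h) by (unfold q; field; auto).
  assert (K: (q - dphi s) * (t - s) >= D).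
  { assert (l * ((q - dphi s) * (t - s)) >= l * D).
    { unfold D. replace (l * ((q - dphi s) * (t - s))) with (q * h - l * dphi s * (t - s)) by (unfold h; ring).
      rewrite <- Eq. nra. }
    nra. }
  assert (Rabs ((q - dphi s) * (t - s)) < D / 2).
  { rewrite Rabs_mult.
    apply Rmult_lt_compat_r with (r := Rabs (t - s)) in Hdel; auto.
    replace (D / (2 * Rabs (t - s)) * Rabs (t - s)) with (D/2) in Hdel by (field; lra). lra. }
  pose proof (Rle_abs ((q - dphi s) * (t - s))). lra.
Qed.

Lemma dphi_decr eta phi dphi : desingularizing eta phi dphi ->
  forall s t, 0 < s -> s <= t -> below eta t -> dphi t <= dphi s.
Proof.
  intros D s t Hs Hst Hb.
  assert (Hbs : below eta s) by (eapply below_mono; eauto).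
  pose proof (tangent _ _ _ D s t Hs Hbs ltac:(lra) Hb).
  pose proof (tangent _ _ _ D t s ltac:(lra) Hb ltac:(lra) Hbs).
  destruct (Req_dec s t). subst; lra. nra.
Qed.

Lemma phi_mono eta phi dphi : desingularizing eta phi dphi ->
  forall s t, 0 <= s -> s <= t -> 0 < t -> below eta t -> phi s <= phi t.
Proof.
  intros D s t Hs Hst Ht Hb.
  pose proof (tangent _ _ _ D t s Ht Hb Hs (below_mono _ _ _ Hb Hst)).
  destruct D as [_ [_ [_ [_ [_ [_ [_ Hdp]]]]]]]. specialize (Hdp t Ht Hb). nra.
Qed.

Lemma Phi_step eta phi dphi Phi : desingularizing eta phi dphi ->
  (forall t, 0 < t -> below eta t -> derivable_pt_lim Phi t (- (dphi t) ^ 2)) ->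
  forall y x, 0 < y -> y <= x -> below eta x ->
  (dphi x)^2 * (x - y) <= Phi y - Phi x.
Proof.
  intros D HP y x Hy Hyx Hb.
  destruct (Req_dec y x). { subst. lra. }
  destruct (MVT_cor2 Phi (fun t => - (dphi t)^2) y x) as [c [Ec Hc]]. lra.
  { intros c Hc. apply HP. lra. eapply below_mono; eauto; lra. }
  pose proof (dphi_decr _ _ _ D c x ltac:(lra) ltac:(lra) Hb).
  destruct D as [_ [_ [_ [_ [_ [_ [_ Hdp]]]]]]]. specialize (Hdp x ltac:(lra) Hb).
  assert (dphi x ^2 <= dphi c ^2) by nra. nra.
Qed.

Lemma Phi_strict eta phi dphi Phi : desingularizing eta phi dphi ->
  (forall t, 0 < t -> below eta t -> derivable_pt_lim Phi t (- (dphi t) ^ 2)) ->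
  forall y x, 0 < y -> y < x -> below eta x -> Phi x < Phi y.
Proof.
  intros D HP y x Hy Hyx Hb.
  pose proof (Phi_step _ _ _ _ D HP y x Hy ltac:(lra) Hb).
  destruct D as [_ [_ [_ [_ [_ [_ [_ Hdp]]]]]]]. specialize (Hdp x ltac:(lra) Hb).
  assert (0 < dphi x ^2 * (x - y)) by (apply Rmult_lt_0_compat; nra). lra.
Qed.

Lemma psum_shift1 (b : nat -> R) n : psum b 1 n = psum (fun j => b (S j)) 0 n.
Proof. induction n; simpl; auto. rewrite IHn. reflexivity. Qed.

Lemma psum_split u k0 n : psum u 0 (k0 + n) = psum u 0 k0 + psum u k0 n.
Proof.
  induction n; simpl. rewrite Nat.add_0_r; ring.
  rewrite Nat.add_succ_r. simpl. rewrite IHn. ring.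
Qed.

Lemma psum_mono u k0 n p : (forall j, 0 <= u j) -> psum u k0 n <= psum u k0 (n + p).
Proof.
  intro Hu. induction p. rewrite Nat.add_0_r; lra.
  rewrite Nat.add_succ_r. simpl. specialize (Hu (k0 + (n+p))%nat). lra.
Qed.

Lemma psum_unbounded (b : nat -> R) k0 :
  (forall k, 0 < b (S k)) -> ~ (exists S, forall n, psum b 1 n <= S) ->
  forall M, exists n, M < psum (fun j => b (S j)) k0 n.
Proof.
  intros Hb Hns M. apply NNPP. intro C. apply Hns.
  exists (psum (fun j => b (S j)) 0 k0 + M). intro n.
  rewrite psum_shift1.
  assert (H1: psum (fun j => b (S j)) 0 n <= psum (fun j => b (S j)) 0 (n + k0)).
  { apply psum_mono. intro j. left. apply Hb. }
  replace (n + k0)%nat with (k0 + n)%nat in H1 by lia.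
  rewrite psum_split in H1.
  assert (psum (fun j => b (S j)) k0 n <= M).
  { destruct (Rle_or_lt (psum (fun j => b (S j)) k0 n) M); auto. exfalso; apply C; eauto. }
  lra.
Qed.

Definition clamp (a c x : R) := Rmax a (Rmin x c).

Lemma clamp_lip a c x y : a <= c -> Rabs (clamp a c x - clamp a c y) <= Rabs (x - y).
Proof.
  intro. unfold clamp, Rmax, Rmin.
  repeat destruct Rle_dec; unfold Rabs; repeat destruct Rcase_abs; lra.
Qed.

Lemma IVT_loc (g : R -> R) a c y : a < c ->
  (forall t, a <= t <= c -> continuity_pt g t) ->
  g c <= y <= g a -> exists t, a <= t <= c /\ g t = y.
Proof.
  intros Hac Hg Hy.
  set (h := fun x => g (clamp a c x)).
  assert (Hcl: forall x, a <= clamp a c x <= c).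
  { intro x. unfold clamp, Rmax, Rmin. repeat destruct Rle_dec; lra. }
  assert (Hcont: continuity h).
  { intro x. unfold h. apply (continuity_pt_comp (clamp a c) g x).
    - unfold continuity_pt, continue_in, limit1_in, limit_in. intros eps He.
      exists eps. split; auto. intros z [_ Hz]. simpl in *. unfold R_dist in *.
      pose proof (clamp_lip a c z x ltac:(lra)). lra.
    - apply Hg. apply Hcl. }
  assert (ha: h a = g a). { unfold h, clamp, Rmax, Rmin. repeat destruct Rle_dec; try lra; f_equal; lra. }
  assert (hc: h c = g c). { unfold h, clamp, Rmax, Rmin. repeat destruct Rle_dec; try lra; f_equal; lra. }
  destruct (Continuity.IVT_gen h a c y Hcont) as [t [Ht Et]].
  { rewrite ha, hc. unfold Rmin, Rmax. repeat destruct Rle_dec; lra. }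
  rewrite Rmin_left, Rmax_right in Ht by lra.
  exists t. split; auto. unfold h in Et.
  replace (clamp a c t) with t in Et; auto.
  unfold clamp, Rmax, Rmin. repeat destruct Rle_dec; lra.
Qed.

Lemma le_eps A B : (forall eps, 0 < eps -> A <= B + eps) -> A <= B.
Proof.
  intro HE. destruct (Rle_or_lt A B); auto.
  specialize (HE ((A - B)/2) ltac:(lra)). lra.
Qed.

Theorem mainTheorem6
  (H : Hilbert) (f : efun H) (x : nat -> H) (a b : nat -> R)
  (xs : H) (eta : option R) (phi dphi Phi : R -> R) (m : R)
  (Hproper : proper f) (Hlsc : lsc f)
  (H1 : forall k, 0 < a k /\
     ele (option_map (fun v => v + a k * (hnorm (hsub (x (S k)) (x k))) ^ 2) (f (x (S k))))
         (f (x k)))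
  (H2 : forall k, 0 < b (S k) /\
     lazy_slope_le f (x k) (hnorm (hsub (x (S k)) (x k)) / b (S k)))
  (H3i : exists alow, 0 < alow /\ forall k, alow <= a k)
  (H3ii : ~ (exists S, forall n, psum b 1 n <= S))
  (H3iii : exists M, forall k, (1 <= k)%nat -> / (a k * b k) <= M)
  (Hm_lb : forall k, m <= a k * b (S k))
  (Hm_glb : forall m', (forall k, m' <= a k * b (S k)) -> m' <= m)
  (Hm_pos : 0 < m)
  (Hfconv : fconv f x xs)
  (HKL : KL_at f xs eta phi dphi)
  (HPhi : forall t, 0 < t -> below eta t -> derivable_pt_lim Phi t (- (dphi t) ^ 2)) :
  ((exists L, forall eps, 0 < eps -> exists delta, 0 < delta /\
       forall t, 0 < t -> t < delta -> below eta t -> Rabs (Phi t - L) < eps) ->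
   exists K, f (x K) = f xs /\ forall k, (K <= k)%nat -> x k = xs)
  /\
  ((forall M, exists delta, 0 < delta /\
       forall t, 0 < t -> t < delta -> below eta t -> M < Phi t) ->
   exists k0 : nat, exists C1 C2 : R, exists K : nat, (k0 <= K)%nat /\
     forall k, (K <= k)%nat ->
       exists t, 0 < t /\ below eta t /\
         Phi t = m * psum (fun n => b (S n)) k0 (k - k0) /\
         (exists v fs, f (x k) = Some v /\ f xs = Some fs /\ Rabs (v - fs) <= C1 * t) /\
         hnorm (hsub xs (x k)) <= C2 * phi t).
Proof.
  destruct HKL as [Dphi [fs [Efs [dKL [HdKL HKLx]]]]].
  assert (Hfin: forall k, exists v, f (x k) = Some v).
  { intro k. destruct (H2 k) as [_ Hl]. destruct (Hl 1 ltac:(lra)) as [p [[u [q [[_ [fx [E _]]] _]]] _]].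
    eauto. }
  set (fk := fun k => match f (x k) with Some v => v | None => 0 end).
  assert (Hfk: forall k, f (x k) = Some (fk k)).
  { intro k. unfold fk. destruct (Hfin k) as [v E]. rewrite E. reflexivity. }
  set (d := fun k => hnorm (hsub (x (S k)) (x k))).
  assert (Hd0: forall k, 0 <= d k) by (intro; apply hnorm_nonneg).
  assert (Hdec: forall k, fk (S k) + a k * d k ^ 2 <= fk k).
  { intro k. destruct (H1 k) as [_ E]. rewrite !Hfk in E. exact E. }
  assert (Ha: forall k, 0 < a k) by (intro k; apply H1).
  assert (Hb: forall k, 0 < b (S k)) by (intro k; apply H2).
  destruct Hfconv as [Hxc [fx [Efx Hfc]]].
  rewrite Efs in Efx. injection Efx as <-.
  set (r := fun k => fk k - fs).
  assert (Hrs: forall k, r (S k) + a k * d k ^ 2 <= r k).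
  { intro k. unfold r. specialize (Hdec k). lra. }
  assert (Hrs1: forall k, r (S k) <= r k).
  { intro k. specialize (Hrs k). specialize (Ha k). specialize (Hd0 k). nra. }
  assert (Hrm: forall k j, (k <= j)%nat -> r j <= r k).
  { intros k j Hkj. induction Hkj as [|j0 _ IH]; [lra|]. specialize (Hrs1 j0). lra. }
  assert (Hrca: forall eps, 0 < eps -> exists N, forall n, (N <= n)%nat -> Rabs (r n) < eps).
  { intros eps He. destruct (Hfc eps He) as [N HN]. exists N. intros n Hn.
    destruct (HN n Hn) as [v [Ev Hv]]. rewrite Hfk in Ev. injection Ev as <-. exact Hv. }
  assert (Hrc: forall eps, 0 < eps -> exists N, forall n, (N <= n)%nat -> r n < eps).
  { intros eps He. destruct (Hrca eps He) as [N HN]. exists N. intros n Hn.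
    specialize (HN n Hn). pose proof (Rle_abs (r n)). lra. }
  assert (Hr0: forall k, 0 <= r k).
  { intro k. destruct (Rle_or_lt 0 (r k)); auto. exfalso.
    destruct (Hrca (- r k) ltac:(lra)) as [N HN].
    specialize (HN (max N k) ltac:(lia)). specialize (Hrm k (max N k) ltac:(lia)).
    pose proof (Rle_abs (- r (max N k))) as HH. rewrite Rabs_Ropp in HH. lra. }
  destruct (Hxc dKL HdKL) as [N1 HN1].
  set (e0 := match eta with Some e => e | None => 1 end).
  assert (He0: 0 < e0). { unfold e0. destruct Dphi as [Hep _]. destruct eta; simpl in *; lra. }
  assert (Hbe0: forall t, t < e0 -> below eta t). { intros t Ht. unfold e0 in Ht. destruct eta; simpl; auto. }
  destruct (Hrc e0 He0) as [N2 HN2].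
  set (N := max N1 N2).
  assert (HN: forall k, (N <= k)%nat -> hnorm (hsub (x k) xs) < dKL /\ below eta (r k)).
  { intros k Hk. split. apply HN1. lia. apply Hbe0, HN2. lia. }

  assert (Hdp: forall t, 0 < t -> below eta t -> 0 < dphi t).
  { destruct Dphi as [_ [_ [_ [_ [_ [_ [_ Hdp]]]]]]]. exact Hdp. }
  assert (Hphi0: forall t, 0 <= t -> below eta t -> 0 <= phi t).
  { destruct Dphi as [_ [Hp _]]. exact Hp. }
  assert (HA: forall k, (N <= k)%nat -> 0 < r k -> b (S k) <= dphi (r k) * d k).
  { intros k Hk Hrk. destruct (HN k Hk) as [Hn Hbr].
    assert (HD := Hdp _ Hrk Hbr). assert (HB := Hb k).
    assert (Hle: / dphi (r k) <= d k / b (S k)).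
    { apply le_eps. intros eps He. destruct (H2 k) as [_ Hl].
      destruct (Hl eps He) as [p [Hsp Hp]].
      assert (HK := HKLx (x k) (fk k) Hn (Hfk k) ltac:(unfold r in Hrk; lra) Hbr p Hsp).
      fold (r k) in HK. unfold d. lra. }
    assert (E1: b (S k) = (dphi (r k) * b (S k)) * / dphi (r k)) by (field; lra).
    assert (E2: dphi (r k) * d k = (dphi (r k) * b (S k)) * (d k / b (S k))) by (field; lra).
    rewrite E1, E2. apply Rmult_le_compat_l; auto. nra. }
  assert (HB: forall k, (N <= k)%nat -> m * d k <= phi (r k) - phi (r (S k))).
  { intros k Hk. destruct (HN k Hk) as [_ Hbr].
    assert (Hbr1: below eta (r (S k))) by (apply (below_mono _ _ _ Hbr); auto).
    specialize (Hrs k). specialize (Ha k). specialize (Hd0 k). pose proof (Hr0 (S k)).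
    destruct (Req_dec (r k) 0) as [Z|Z].
    - assert (d k = 0).
      { rewrite Z in Hrs. assert (a k * d k ^ 2 <= 0) by lra.
        assert (d k ^2 = 0) by nra. nra. }
      rewrite H3. assert (r (S k) = 0) by (specialize (Hrs1 k); lra).
      rewrite H4, Z. lra.
    - assert (Hrk: 0 < r k) by (pose proof (Hr0 k); lra).
      pose proof (tangent _ _ _ Dphi (r k) (r (S k)) Hrk Hbr (Hr0 (S k)) Hbr1) as T.
      pose proof (HA k Hk Hrk) as HAk. pose proof (Hdp _ Hrk Hbr). pose proof (Hm_lb k).
      pose proof (Hb k).
      assert (dphi (r k) * (r k - r (S k)) >= dphi (r k) * (a k * d k ^ 2)) by nra.
      assert (dphi (r k) * (a k * d k ^ 2) = a k * d k * (dphi (r k) * d k)) by ring.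
      assert (a k * d k * (dphi (r k) * d k) >= a k * d k * b (S k)).
      { apply Rle_ge, Rmult_le_compat_l. nra. lra. }
      assert (a k * d k * b (S k) >= m * d k) by nra.
      lra. }
  assert (HC: forall k, (N <= k)%nat -> 0 < r (S k) -> m * b (S k) <= Phi (r (S k)) - Phi (r k)).
  { intros k Hk Hrs1k. destruct (HN k Hk) as [_ Hbr].
    assert (Hrk: 0 < r k) by (specialize (Hrs1 k); lra).
    pose proof (Phi_step _ _ _ _ Dphi HPhi (r (S k)) (r k) Hrs1k (Hrs1 k) Hbr) as P.
    pose proof (HA k Hk Hrk) as HAk. pose proof (Hdp _ Hrk Hbr). pose proof (Hm_lb k).
    pose proof (Hb k). specialize (Hrs k). specialize (Ha k). specialize (Hd0 k).
    assert (dphi (r k) ^ 2 * (r k - r (S k)) >= dphi (r k) ^2 * (a k * d k ^ 2)).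
    { apply Rle_ge, Rmult_le_compat_l; nra. }
    assert (dphi (r k) ^2 * (a k * d k ^ 2) = a k * (dphi (r k) * d k)^2) by ring.
    assert (a k * (dphi (r k) * d k)^2 >= a k * b (S k) ^2).
    { apply Rle_ge, Rmult_le_compat_l. lra. apply pow_incr. lra. }
    assert (a k * b (S k) ^2 >= m * b (S k)) by nra.
    lra. }
  assert (HS: forall k0 n, (N <= k0)%nat -> 0 < r (k0 + n)%nat ->
     Phi (r k0) + m * psum (fun j => b (S j)) k0 n <= Phi (r (k0 + n)%nat)).
  { intros k0 n Hk0. induction n; intro Hp.
    - simpl. rewrite Nat.add_0_r. lra.
    - simpl. rewrite Nat.add_succ_r in Hp |- *.
      assert (0 < r (k0 + n)%nat) by (specialize (Hrs1 (k0+n)%nat); lra).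
      specialize (IHn H0). specialize (HC (k0+n)%nat ltac:(lia) Hp). lra. }
  assert (HDist: forall k, (N <= k)%nat -> hnorm (hsub xs (x k)) <= phi (r k) / m).
  { intros k Hk.
    assert (Hseg: forall n, hnorm (hsub (x (k + n)%nat) (x k)) <= (phi (r k) - phi (r (k + n)%nat)) / m).
    { induction n.
      - rewrite Nat.add_0_r, hnorm_self. unfold Rdiv. rewrite Rminus_diag. lra.
      - rewrite Nat.add_succ_r.
        pose proof (htri _ (x (S (k+n))) (x (k+n)%nat) (x k)).
        pose proof (HB (k+n)%nat ltac:(lia)). unfold d in H3.
        apply Rle_trans with (1 := H0).
        apply Rmult_le_reg_l with m; auto.
        replace (m * ((phi (r k) - phi (r (S (k + n)))) / m)) with
          ((phi (r k) - phi (r (k + n)%nat)) + (phi (r (k+n)%nat) - phi (r (S (k + n))))) by (field; lra).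
        apply Rmult_le_compat_l with (r := m) in IHn; [|lra].
        replace (m * ((phi (r k) - phi (r (k + n)%nat)) / m)) with (phi (r k) - phi (r (k + n)%nat)) in IHn by (field; lra).
        lra. }
    apply le_eps. intros eps He.
    destruct (Hxc eps He) as [N3 HN3].
    specialize (HN3 (k + N3)%nat ltac:(lia)). rewrite hnorm_sym in HN3.
    pose proof (htri _ xs (x (k + N3)%nat) (x k)).
    specialize (Hseg N3).
    destruct (HN (k + N3)%nat ltac:(lia)) as [_ Hb3].
    pose proof (Hphi0 _ (Hr0 (k + N3)%nat) Hb3).
    assert (phi (r (k + N3)%nat) / m >= 0).
    { unfold Rdiv. apply Rle_ge, Rmult_le_pos; auto. left; apply Rinv_0_lt_compat; auto. }
    unfold Rdiv in *. lra. }

  split.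
  - intros [L HL]. destruct (HL 1 ltac:(lra)) as [del [Hdel HPL]].
    assert (HK: exists K, (N <= K)%nat /\ r K = 0).
    { apply NNPP; intro C.
      assert (Hpos: forall k, (N <= k)%nat -> 0 < r k).
      { intros k Hk. destruct (Req_dec (r k) 0). exfalso; apply C; eauto. pose proof (Hr0 k); lra. }
      destruct (Hrc del Hdel) as [N3 HN3].
      set (k0 := max N N3).
      destruct (psum_unbounded b k0 Hb H3ii ((L + 1 - Phi (r k0))/m)) as [n Hn].
      pose proof (HS k0 n ltac:(lia) (Hpos (k0+n)%nat ltac:(lia))) as HSn.
      pose proof (HPL (r (k0+n)%nat) (Hpos (k0+n)%nat ltac:(lia)) (HN3 (k0+n)%nat ltac:(lia))
                    (proj2 (HN (k0+n)%nat ltac:(lia)))) as Hab.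
      pose proof (Rle_abs (Phi (r (k0 + n)%nat) - L)).
      apply Rmult_lt_compat_l with (r := m) in Hn; auto.
      replace (m * ((L + 1 - Phi (r k0)) / m)) with (L + 1 - Phi (r k0)) in Hn by (field; lra).
      lra. }
    destruct HK as [K [HKN HK0]].
    assert (Hz: forall j, (K <= j)%nat -> r j = 0).
    { intros j Hj. pose proof (Hrm K j Hj). pose proof (Hr0 j). lra. }
    assert (Hst: forall j, (K <= j)%nat -> x (S j) = x j).
    { intros j Hj. apply hnorm_zero. fold (d j).
      specialize (Hrs j). rewrite (Hz j Hj), (Hz (S j) ltac:(lia)) in Hrs.
      specialize (Ha j). specialize (Hd0 j).
      assert (a j * d j ^ 2 <= 0) by lra. assert (d j ^2 <= 0) by nra. nra. }
    assert (Hcst: forall n, x (K + n)%nat = x K).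
    { induction n. rewrite Nat.add_0_r; auto. rewrite Nat.add_succ_r, Hst by lia. auto. }
    assert (HxK: x K = xs).
    { apply hnorm_zero. apply Rle_antisym; [|apply hnorm_nonneg].
      apply le_eps. intros eps He. destruct (Hxc eps He) as [N3 HN3].
      specialize (HN3 (K + N3)%nat ltac:(lia)). rewrite Hcst in HN3. lra. }
    exists K. split.
    + rewrite Hfk, Efs. f_equal. unfold r in HK0. lra.
    + intros k Hk. replace k with (K + (k - K))%nat by lia. rewrite Hcst. auto.
  - intros HPinf.
    destruct (HPinf 0) as [d0 [Hd0' Hpd0]].
    set (tau := Rmin d0 e0 / 2).
    assert (Htau: 0 < tau /\ tau < d0 /\ tau < e0).
    { unfold tau. pose proof (Rmin_l d0 e0). pose proof (Rmin_r d0 e0).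
      assert (0 < Rmin d0 e0) by (apply Rmin_glb_lt; lra). lra. }
    destruct Htau as [Ht0 [Htd Hte]].
    assert (Hbt: below eta tau) by (apply Hbe0; auto).
    assert (HPt: 0 < Phi tau) by (apply Hpd0; auto).
    destruct (Hrc tau Ht0) as [N3 HN3].
    set (k0 := max N N3).
    destruct (psum_unbounded b k0 Hb H3ii (Phi tau / m)) as [K' HK'].
    exists k0, 1, (/ m), (k0 + K')%nat. split; [lia|].
    intros k Hk.
    set (Sk := psum (fun n => b (S n)) k0 (k - k0)).
    assert (HSK: Phi tau < m * Sk).
    { assert (psum (fun n => b (S n)) k0 K' <= Sk).
      { unfold Sk. replace (k - k0)%nat with (K' + (k - k0 - K'))%nat by lia.
        apply psum_mono. intro j; left; apply Hb. }
      apply Rmult_lt_compat_l with (r := m) in HK'; auto.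
      replace (m * (Phi tau / m)) with (Phi tau) in HK' by (field; lra). nra. }
    destruct (HPinf (m * Sk)) as [d1 [Hd1 Hpd1]].
    set (t1 := Rmin d1 tau / 2).
    assert (Ht1: 0 < t1 /\ t1 < d1 /\ t1 < tau).
    { unfold t1. pose proof (Rmin_l d1 tau). pose proof (Rmin_r d1 tau).
      assert (0 < Rmin d1 tau) by (apply Rmin_glb_lt; lra). lra. }
    destruct Ht1 as [Ht10 [Ht1d Ht1t]].
    assert (HP1: m * Sk < Phi t1) by (apply Hpd1; auto; apply Hbe0; lra).
    destruct (IVT_loc Phi t1 tau (m * Sk) Ht1t) as [t [Ht HPt_]].
    { intros t Ht. apply derivable_continuous_pt. exists (- (dphi t)^2).
      apply HPhi. lra. apply Hbe0. lra. }
    { lra. }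
    assert (Hbtt: below eta t) by (apply Hbe0; lra).
    exists t. split; [lra|]. split; [auto|]. split; [auto|].
    assert (Hrt: r k <= t).
    { destruct (Req_dec (r k) 0) as [Z|Z]. lra.
      assert (Hrk: 0 < r k) by (pose proof (Hr0 k); lra).
      pose proof (HS k0 (k - k0)%nat ltac:(lia)) as HSk.
      replace (k0 + (k - k0))%nat with k in HSk by lia.
      specialize (HSk Hrk). fold Sk in HSk.
      assert (Hrk0: r k <= r k0) by (apply Hrm; lia).
      assert (Hk0t: r k0 < tau) by (apply HN3; lia).
      pose proof (Phi_strict _ _ _ _ Dphi HPhi (r k0) tau ltac:(lra) Hk0t Hbt).
      destruct (Rle_or_lt (r k) t) as [Hle|Hlt]; auto.
      pose proof (Phi_strict _ _ _ _ Dphi HPhi t (r k) ltac:(lra) Hlt (Hbe0 (r k) ltac:(lra))).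
      lra. }
    split.
    + exists (fk k), fs. split; [apply Hfk|]. split; [auto|].
      fold (r k). rewrite Rabs_pos_eq by apply Hr0. lra.
    + pose proof (HDist k ltac:(lia)).
      pose proof (phi_mono _ _ _ Dphi (r k) t (Hr0 k) Hrt ltac:(lra) Hbtt).
      unfold Rdiv in H0. rewrite Rmult_comm in H0.
      apply Rle_trans with (1 := H0). apply Rmult_le_compat_l; auto.
      left; apply Rinv_0_lt_compat; auto.
Qed.
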